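(* Let $(X,|\cdot|_X)$ be a Banach space, $T>0$, and let $A\colon D(A)\subset X\to X$ be the infinitesimal generator of a $C_0$-semigroup $\{S(t): t\ge0\}$ on $X$. Let $C_A\ge0$ be a constant with $|S(t)|_{\mathcal L(X)}\le C_A$ for all $t\in[0,2T]$. Let $a,b,k>0$ and let $F,G\colon X^2\to X$ be continuous. Assume: (i) there are nonnegative constants $a_{11},a_{12},a_{21},a_{22}$ such that for all $x,\bar x,y,\bar y\in X$, $|F(x,y)-F(\bar x,\bar y)|_X\le a_{11}|x-\bar x|_X+a_{12}|y-\bar y|_X$ and $|G(x,y)-G(\bar x,\bar y)|_X\le a_{21}|x-\bar x|_X+a_{22}|y-\bar y|_X$; (ii) there exists $\theta\ge0$ such that the matrix \[ M(\theta):=C_A\begin{bmatrix}\frac1a+\left(1+\frac1a\right)Ta_{11}+\frac kaTa_{21} & \left(\left(1+\frac1a\right)a_{12}+\frac kaa_{22}\right)\frac{e^{\theta T}-1}{\theta}\\[3pt] Ta_{21} & a_{22}\frac{1-e^{-\theta T}}{\theta}\end{bmatrix} \] is convergent to zero. Then for every $\beta\in X$ there exists a unique pair $(x,y)\in C([0,T];X)^2$ with $y(0)=\beta$ such that for all $t\in[0,T]$ \[ x(t)=S(t)x(0)+\int_0^tS(t-s)F(x(s),y(s))\,ds,\qquad y(t)=S(t)y(0)+\int_0^tS(t-s)G(x(s),y(s))\,ds, \] and $x(T)-a\,x(0)=k\big(y(T)-b\,y(0)\big)$.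
   Context: $\mathcal L(X)$ is the space of bounded linear operators on $X$ with the operator norm. For $\theta=0$ the quotients $\frac{e^{\theta T}-1}{\theta}$ and $\frac{1-e^{-\theta T}}{\theta}$ are understood as their limit value $T$. A square matrix with nonnegative entries is convergent to zero if its powers tend to the zero matrix (equivalently, its spectral radius is $<1$). *)

(* Defs.v *)
From Stdlib Require Import Reals.
From Coquelicot Require Import Coquelicot.
Open Scope R_scope.

Record M2 := mkM2 { m11 : R; m12 : R; m21 : R; m22 : R }.

Definition M2mul (A B : M2) : M2 :=
  mkM2 (m11 A * m11 B + m12 A * m21 B) (m11 A * m12 B + m12 A * m22 B)
       (m21 A * m11 B + m22 A * m21 B) (m21 A * m12 B + m22 A * m22 B).

Definition M2id : M2 := mkM2 1 0 0 1.

Fixpoint M2pow (A : M2) (n : nat) : M2 :=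
  match n with O => M2id | S n => M2mul A (M2pow A n) end.

Definition convergent_to_zero (A : M2) : Prop :=
  is_lim_seq (fun n => m11 (M2pow A n)) 0 /\ is_lim_seq (fun n => m12 (M2pow A n)) 0 /\
  is_lim_seq (fun n => m21 (M2pow A n)) 0 /\ is_lim_seq (fun n => m22 (M2pow A n)) 0.

(* (e^{θT}-1)/θ and (1-e^{-θT})/θ, with value T at θ = 0 *)
Definition qplus (theta T : R) : R :=
  if Req_EM_T theta 0 then T else (exp (theta * T) - 1) / theta.
Definition qminus (theta T : R) : R :=
  if Req_EM_T theta 0 then T else (1 - exp (- (theta * T))) / theta.

Definition Mtheta (CA a k T a11 a12 a21 a22 theta : R) : M2 :=
  mkM2 (CA * (1 / a + (1 + 1 / a) * T * a11 + k / a * T * a21))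
       (CA * (((1 + 1 / a) * a12 + k / a * a22) * qplus theta T))
       (CA * (T * a21))
       (CA * (a22 * qminus theta T)).

Section Semigroup.
Context {X : CompleteNormedModule R_AbsRing}.

Definition bounded_linear_op (L : X -> X) : Prop :=
  (forall u v, L (plus u v) = plus (L u) (L v)) /\
  (forall (r : R) u, L (scal r u) = scal r (L u)) /\
  (exists M : R, forall u, norm (L u) <= M * norm u).

Definition C0_semigroup (S : R -> X -> X) : Prop :=
  (forall t, 0 <= t -> bounded_linear_op (S t)) /\
  (forall u, S 0 u = u) /\
  (forall t s u, 0 <= t -> 0 <= s -> S (t + s) u = S t (S s u)) /\
  (forall u, filterlim (fun t => S t u) (at_right 0) (locally u)).

Definition is_generator (S : R -> X -> X) (D : X -> Prop) (A : X -> X) : Prop :=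
  (forall u, D u <-> exists v,
      filterlim (fun h => scal (/ h) (minus (S h u) u)) (at_right 0) (locally v)) /\
  (forall u, D u ->
      filterlim (fun h => scal (/ h) (minus (S h u) u)) (at_right 0) (locally (A u))).

Definition continuous_on_0T (T : R) (f : R -> X) : Prop :=
  forall t, 0 <= t <= T ->
    filterlim f (within (fun s => 0 <= s <= T) (locally t)) (locally (f t)).

Definition mild_eq (S : R -> X -> X) (H : X -> X -> X) (x y z : R -> X) (t : R) : Prop :=
  exists I : X, is_RInt (fun s => S (t - s) (H (x s) (y s))) 0 t I /\
                z t = plus (S t (z 0)) I.

Definition is_solution (S : R -> X -> X) (F G : X -> X -> X) (T a b k : R) (beta : X)
  (x y : R -> X) : Prop :=
  continuous_on_0T T x /\ continuous_on_0T T y /\ y 0 = beta /\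
  (forall t, 0 <= t <= T -> mild_eq S F x y x t /\ mild_eq S G x y y t) /\
  minus (x T) (scal a (x 0)) = scal k (minus (y T) (scal b (y 0))).

End Semigroup.

(* Main.v *)
Require Import Defs.
From Stdlib Require Import Reals Lra Lia.
From Coquelicot Require Import Coquelicot.
Open Scope R_scope.


Section GA.
Context {G : AbelianGroup}.
Lemma mppG (a b a' b' : G) : minus (plus a b) (plus a' b') = plus (minus a a') (minus b b').
Proof.
  unfold minus. rewrite opp_plus. rewrite <- !plus_assoc. f_equal.
  rewrite (plus_comm b). rewrite <- plus_assoc. f_equal. apply plus_comm.
Qed.
Lemma mmmG (a b a' b' : G) : minus (minus a b) (minus a' b') = minus (minus a a') (minus b b').
Proof.
  unfold minus at 2 3. rewrite mppG. unfold minus. f_equal. f_equal.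
  rewrite (opp_plus (G:=G)). rewrite opp_opp. reflexivity.
Qed.
Lemma mpcG (a b c : G) : minus (plus a b) c = plus (minus a c) b.
Proof.
  unfold minus. rewrite <- !plus_assoc. f_equal. apply plus_comm.
Qed.
End GA.
Lemma mscG {K : Ring} {V : ModuleSpace K} (k : K) (a a' : V) : minus (scal k a) (scal k a') = scal k (minus a a').
Proof.
  unfold minus. rewrite (scal_distr_l (K:=K) (V:=V)). rewrite (scal_opp_r (K:=K) (V:=V)). reflexivity.
Qed.
Section NG.
Context {V : NormedModule R_AbsRing}.
Lemma norm_minus_leG (a b : V) : norm (minus a b) <= norm a + norm b.
Proof.
  unfold minus. eapply Rle_trans. apply norm_triangle. rewrite norm_opp. lra.
Qed.

Lemma norm_minus_symG (a b : V) : norm (minus a b) = norm (minus b a).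
Proof. rewrite <- norm_opp. rewrite opp_minus. reflexivity. Qed.

Lemma norm_minus_triG (a b c : V) : norm (minus a c) <= norm (minus a b) + norm (minus b c).
Proof. rewrite (minus_trans b). apply norm_triangle. Qed.

Lemma norm_scal_leG (r : R) (v : V) : norm (scal r v) <= Rabs r * norm v.
Proof. apply (@norm_scal R_AbsRing). Qed.

Lemma eq_of_normG (a b : V) : (forall eps, 0 < eps -> norm (minus a b) <= eps) -> a = b.
Proof.
  intros H. assert (H0 : norm (minus a b) = 0).
  { apply Rle_antisym. apply Rle_plus_epsilon. intros e He. rewrite Rplus_0_l. auto.
    apply norm_ge_0. }
  apply norm_eq_zero in H0.
  apply plus_reg_r with (r := opp b). rewrite plus_opp_r. exact H0.
Qed.

Lemma norm_minus_selfG (a : V) : norm (minus a a) = 0.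
Proof. rewrite minus_eq_zero. apply norm_zero. Qed.
End NG.


Lemma mprG {G : AbelianGroup} (a a' e : G) : minus (plus a e) (plus a' e) = minus a a'.
Proof. rewrite mppG. rewrite minus_eq_zero. apply plus_zero_r. Qed.
Lemma mplG {G : AbelianGroup} (e a a' : G) : minus (plus e a) (plus e a') = minus a a'.
Proof. rewrite mppG. rewrite minus_eq_zero. apply plus_zero_l. Qed.

Lemma cpt_diff_eqG {V : ModuleSpace R_Ring} (ia kk : R) (A1 A2 B1 B2 A1' A2' B2' E : V) :
  minus (scal ia (plus (minus (plus A1 A2) (scal kk (plus B1 B2))) E))
        (scal ia (plus (minus (plus A1' A2') (scal kk (plus B1 B2'))) E))
  = scal ia (minus (plus (minus A1 A1') (minus A2 A2')) (scal kk (minus B2 B2'))).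
Proof.
  etransitivity. exact (mscG ia (plus (minus (plus A1 A2) (scal kk (plus B1 B2))) E)
                                 (plus (minus (plus A1' A2') (scal kk (plus B1 B2'))) E)).
  f_equal.
  etransitivity. exact (mprG (minus (plus A1 A2) (scal kk (plus B1 B2))) (minus (plus A1' A2') (scal kk (plus B1 B2'))) E).
  etransitivity. exact (mmmG (plus A1 A2) (scal kk (plus B1 B2)) (plus A1' A2') (scal kk (plus B1 B2'))).
  f_equal. exact (mppG A1 A2 A1' A2').
  etransitivity. exact (mscG kk (plus B1 B2) (plus B1 B2')).
  f_equal. exact (mplG B1 B2 B2').
Qed.

Lemma norm_comboG {V : NormedModule R_AbsRing} (u1 u2 u3 : V) (kk : R) : 0 <= kk ->
  norm (minus (plus u1 u2) (scal kk u3)) <= norm u1 + norm u2 + kk * norm u3.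
Proof.
  intros Hk. eapply Rle_trans. apply norm_minus_leG.
  assert (A := norm_triangle u1 u2). assert (B := norm_scal_leG kk u3).
  rewrite Rabs_pos_eq in B by auto. lra.
Qed.

Lemma scal_m1m1G {V : ModuleSpace R_Ring} (v : V) : scal (Ropp 1) (scal (Ropp 1) v) = v.
Proof.
  rewrite scal_assoc. replace (mult (Ropp 1) (Ropp 1)) with (@one R_Ring).
  apply scal_one. unfold mult, one; simpl. ring.
Qed.

Lemma scal_m1_oppG {V : ModuleSpace R_Ring} (v : V) : scal (Ropp 1) (opp v) = v.
Proof.
  rewrite scal_opp_r. replace (Ropp 1) with (opp (@one R_Ring)) by reflexivity.
  rewrite scal_opp_one. exact (opp_opp v).
Qed.

Lemma is_RInt_val {V : NormedModule R_AbsRing} (f : R -> V) a b l l' : l = l' -> is_RInt f a b l -> is_RInt f a b l'.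
Proof. intros; subst; auto. Qed.

Lemma grp1G {G : AbelianGroup} (A u w : G) : minus A (plus (minus A u) w) = minus u w.
Proof.
  unfold minus. rewrite (opp_plus (G:=G)). rewrite (opp_plus (G:=G)). rewrite (opp_opp (G:=G)).
  rewrite (plus_assoc (G:=G)). rewrite (plus_assoc (G:=G)). rewrite (plus_opp_r (G:=G)). rewrite (plus_zero_l (G:=G)). reflexivity.
Qed.

Lemma bnd1G {V : ModuleSpace R_Ring} (a k b : R) (A B beta x0 : V) : a <> 0 ->
  x0 = scal (/ a) (plus (minus A (scal k B)) (scal (k * b) beta)) ->
  minus A (scal a x0) = scal k (minus B (scal b beta)).
Proof.
  intros Ha H. subst x0. rewrite scal_assoc.
  replace (mult a (/ a)) with (@one R_Ring) by (unfold mult, one; simpl; field; auto).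
  rewrite scal_one.
  etransitivity. exact (grp1G A (scal k B) (scal (k * b) beta)).
  etransitivity. 2: exact (mscG k B (scal b beta)).
  f_equal. rewrite scal_assoc. reflexivity.
Qed.

Lemma bnd2G {V : ModuleSpace R_Ring} (a k b : R) (A B beta x0 : V) : a <> 0 ->
  minus A (scal a x0) = scal k (minus B (scal b beta)) ->
  x0 = scal (/ a) (plus (minus A (scal k B)) (scal (k * b) beta)).
Proof.
  intros Ha H.
  set (c := scal (/ a) (plus (minus A (scal k B)) (scal (k * b) beta))).
  assert (H2 := bnd1G a k b A B beta c Ha eq_refl). fold c in H2.
  rewrite <- H2 in H.
  assert (E : scal a x0 = scal a c).
  { unfold minus in H. apply plus_reg_l in H. rewrite <- (opp_opp (scal a x0)). rewrite H. exact (opp_opp _). }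
  apply (f_equal (scal (/ a))) in E. rewrite !scal_assoc in E.
  replace (mult (/ a) a) with (@one R_Ring) in E by (unfold mult, one; simpl; field; auto).
  rewrite !scal_one in E. exact E.
Qed.

Lemma conv_props (M : M2) : 0 <= m11 M -> 0 <= m12 M -> 0 <= m21 M -> 0 <= m22 M -> convergent_to_zero M ->
  m11 M < 1 /\ m22 M < 1 /\ 0 < (1 - m11 M) * (1 - m22 M) - m12 M * m21 M.
Proof.
  intros N1 N2 N3 N4 [L11 [L12 [L21 L22]]].
  assert (Key : forall v1 v2, 0 <= v1 -> 0 <= v2 -> v1 <= m11 M * v1 + m12 M * v2 ->
                 v2 <= m21 M * v1 + m22 M * v2 -> v1 <= 0 /\ v2 <= 0).
  { intros v1 v2 P1 P2 Q1 Q2.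
    assert (Ind : forall n, v1 <= m11 (M2pow M n) * v1 + m12 (M2pow M n) * v2 /\
                            v2 <= m21 (M2pow M n) * v1 + m22 (M2pow M n) * v2).
    { induction n as [|n [I1 I2]]; simpl. lra.
      set (P := M2pow M n) in *.
      assert (E1 : (m11 M * m11 P + m12 M * m21 P) * v1 + (m11 M * m12 P + m12 M * m22 P) * v2
                   = m11 M * (m11 P * v1 + m12 P * v2) + m12 M * (m21 P * v1 + m22 P * v2)) by ring.
      assert (E2 : (m21 M * m11 P + m22 M * m21 P) * v1 + (m21 M * m12 P + m22 M * m22 P) * v2
                   = m21 M * (m11 P * v1 + m12 P * v2) + m22 M * (m21 P * v1 + m22 P * v2)) by ring.
      rewrite E1, E2.
      assert (m11 M * v1 <= m11 M * (m11 P * v1 + m12 P * v2)) by (apply Rmult_le_compat_l; lra).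
      assert (m12 M * v2 <= m12 M * (m21 P * v1 + m22 P * v2)) by (apply Rmult_le_compat_l; lra).
      assert (m21 M * v1 <= m21 M * (m11 P * v1 + m12 P * v2)) by (apply Rmult_le_compat_l; lra).
      assert (m22 M * v2 <= m22 M * (m21 P * v1 + m22 P * v2)) by (apply Rmult_le_compat_l; lra).
      split; lra. }
    assert (Lim : forall (u1 u2 : nat -> R), is_lim_seq u1 0 -> is_lim_seq u2 0 ->
               is_lim_seq (fun n => u1 n * v1 + u2 n * v2) 0).
    { intros u1 u2 H1 H2.
      assert (A := is_lim_seq_scal_r _ v1 _ H1). assert (B := is_lim_seq_scal_r _ v2 _ H2).
      replace (Rbar_mult 0 v1) with (Finite 0) in A by (simpl; f_equal; ring).
      replace (Rbar_mult 0 v2) with (Finite 0) in B by (simpl; f_equal; ring).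
      assert (C := is_lim_seq_plus' _ _ 0 0 A B). rewrite Rplus_0_r in C. exact C. }
    split.
    - assert (H := is_lim_seq_le (fun _ => v1) _ v1 0 (fun n => proj1 (Ind n)) (is_lim_seq_const v1) (Lim _ _ L11 L12)).
      simpl in H. exact H.
    - assert (H := is_lim_seq_le (fun _ => v2) _ v2 0 (fun n => proj2 (Ind n)) (is_lim_seq_const v2) (Lim _ _ L21 L22)).
      simpl in H. exact H. }
  destruct (Rlt_or_le (m11 M) 1) as [h1|h1].
  2: { exfalso. destruct (Key 1 0) as [K1 _]; try lra. }
  destruct (Rlt_or_le (m22 M) 1) as [h2|h2].
  2: { exfalso. destruct (Key 0 1) as [_ K1]; try lra. }
  split; auto. split; auto.
  destruct (Rlt_or_le 0 ((1 - m11 M) * (1 - m22 M) - m12 M * m21 M)) as [h3|h3]; auto.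
  exfalso. destruct (Key (m12 M) (1 - m11 M)) as [_ K1]; try lra; nra.
Qed.
Section Gen.
Context {X : CompleteNormedModule R_AbsRing}.

Definition cont_in (a b : R) (f : R -> X) (t : R) : Prop :=
  forall eps, 0 < eps -> exists d, 0 < d /\
    forall s, a <= s <= b -> Rabs (s - t) < d -> norm (minus (f s) (f t)) < eps.

Definition clamp (a b s : R) : R := Rmax a (Rmin b s).

Lemma clamp_in a b s : a <= b -> a <= clamp a b s <= b.
Proof. intros. unfold clamp, Rmax, Rmin. repeat destruct Rle_dec; lra. Qed.

Lemma clamp_id a b s : a <= s <= b -> clamp a b s = s.
Proof. intros. unfold clamp, Rmax, Rmin. repeat destruct Rle_dec; lra. Qed.

Lemma clamp_lip a b s t : a <= b -> Rabs (clamp a b s - clamp a b t) <= Rabs (s - t).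
Proof.
  intros. unfold clamp, Rmax, Rmin. repeat destruct Rle_dec;
  unfold Rabs; repeat destruct Rcase_abs; lra.
Qed.

Lemma cont_in_continuous a b f : a <= b ->
  (forall t, a <= t <= b -> cont_in a b f t) ->
  forall z, continuous (fun s => f (clamp a b s)) z.
Proof.
  intros Hab H z. apply filterlim_locally. intros eps.
  destruct (H (clamp a b z) (clamp_in a b z Hab) eps (cond_pos eps)) as [d [Hd Hs]].
  exists (mkposreal d Hd). intros s Hs'. apply (@norm_compat1 R_AbsRing X).
  apply Hs. apply clamp_in; auto.
  eapply Rle_lt_trans. apply clamp_lip; auto. exact Hs'.
Qed.

Lemma ex_RInt_within a b f : a <= b ->
  (forall t, a <= t <= b -> cont_in a b f t) -> ex_RInt f a b.
Proof.
  intros Hab H.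
  apply ex_RInt_ext with (f := fun s => f (clamp a b s)).
  { intros x Hx. rewrite Rmin_left in Hx by lra. rewrite Rmax_right in Hx by lra.
    rewrite clamp_id; auto; lra. }
  apply ex_RInt_continuous. intros z _. apply cont_in_continuous; auto.
Qed.

Lemma cont_in_sub a b a' b' f t : a <= a' -> b' <= b -> cont_in a b f t -> cont_in a' b' f t.
Proof.
  intros H1 H2 H eps Heps. destruct (H eps Heps) as [d [Hd Hs]].
  exists d. split; auto. intros s Hs1 Hs2. apply Hs; [split; lra | auto].
Qed.

Lemma cont0T_cont_in T f : continuous_on_0T T f -> forall t, 0 <= t <= T -> cont_in 0 T f t.
Proof.
  intros H t Ht eps Heps.
  assert (Hnf := @norm_factor_gt_0 _ X).
  assert (He : 0 < eps / (@norm_factor _ X)) by (apply Rdiv_lt_0_compat; auto).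
  destruct (proj1 (filterlim_locally _ _) (H t Ht) (mkposreal _ He)) as [d Hd].
  exists d. split. apply cond_pos. intros s Hs1 Hs2.
  assert (B := Hd s Hs2 Hs1). apply (@norm_compat2 R_AbsRing X) in B. simpl in B.
  replace (norm_factor * (eps / norm_factor)) with eps in B by (field; lra). exact B.
Qed.

Lemma cont_in_cont0T T f : (forall t, 0 <= t <= T -> cont_in 0 T f t) -> continuous_on_0T T f.
Proof.
  intros H t Ht. apply filterlim_locally. intros eps.
  destruct (H t Ht eps (cond_pos eps)) as [d [Hd Hs]].
  exists (mkposreal d Hd). intros s Hs' Hs''. apply (@norm_compat1 R_AbsRing X). apply Hs; auto.
Qed.

Lemma cont_in_ball a b f t eps : 0 < eps -> cont_in a b f t ->
  exists d, 0 < d /\ forall s, a <= s <= b -> Rabs (s - t) < d -> norm (minus (f s) (f t)) < eps.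
Proof. intros; auto. Qed.

Definition linop (L : X -> X) : Prop :=
  (forall u v, L (plus u v) = plus (L u) (L v)) /\ (forall (r : R) u, L (scal r u) = scal r (L u)).

Lemma lin_zero L : linop L -> L zero = zero.
Proof.
  intros [_ H]. transitivity (L (scal (@zero R_Ring) zero)).
  f_equal. symmetry. exact (scal_zero_l (K:=R_Ring) (V:=CompleteNormedModule.ModuleSpace R_AbsRing X) _).
  rewrite H. exact (scal_zero_l (K:=R_Ring) (V:=CompleteNormedModule.ModuleSpace R_AbsRing X) _).
Qed.

Lemma lin_opp L u : linop L -> L (opp u) = opp (L u).
Proof.
  intros [_ H]. transitivity (L (scal (opp (@one R_Ring)) u)).
  f_equal. symmetry. exact (scal_opp_one (K:=R_Ring) (V:=CompleteNormedModule.ModuleSpace R_AbsRing X) _).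
  rewrite H. exact (scal_opp_one (K:=R_Ring) (V:=CompleteNormedModule.ModuleSpace R_AbsRing X) _).
Qed.

Lemma lin_minus L u v : linop L -> L (minus u v) = minus (L u) (L v).
Proof.
  intros HL. unfold minus. rewrite (proj1 HL). rewrite lin_opp; auto.
Qed.

Lemma lin_foldr L f (l : list (R * R)) (x0 : R * R) : linop L ->
  L (seq.foldr plus zero (seq.pairmap (fun x y : R * R => scal (fst y - fst x) (f (snd y))) x0 l))
  = seq.foldr plus zero (seq.pairmap (fun x y : R * R => scal (fst y - fst x) (L (f (snd y)))) x0 l).
Proof.
  intros HL. revert x0. induction l as [|y l IH]; intros x0; simpl.
  - apply lin_zero; auto.
  - rewrite (proj1 HL). rewrite IH. rewrite (proj2 HL). reflexivity.
Qed.

Lemma lin_riemann L f ptd : linop L ->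
  L (Riemann_sum f ptd) = Riemann_sum (fun s => L (f s)) ptd.
Proof.
  intros HL. unfold Riemann_sum. apply lin_foldr; auto.
Qed.

Lemma lin_combo L (u1 u2 u3 : X) (kk : R) : linop L ->
  L (minus (plus u1 u2) (scal kk u3)) = minus (plus (L u1) (L u2)) (scal kk (L u3)).
Proof.
  intros HL. rewrite lin_minus by auto. rewrite (proj1 HL). rewrite (proj2 HL). reflexivity.
Qed.

Lemma is_RInt_lin L C f a b I : linop L -> 0 <= C -> (forall u, norm (L u) <= C * norm u) ->
  is_RInt f a b I -> is_RInt (fun s => L (f s)) a b (L I).
Proof.
  intros HL HC HB HI. unfold is_RInt in *.
  apply filterlim_ext with (f := fun ptd => L (scal (sign (b-a)) (Riemann_sum f ptd))).
  { intros ptd. rewrite (proj2 HL). f_equal. apply (lin_riemann L f ptd HL). }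
  eapply filterlim_comp. exact HI.
  apply filterlim_locally. intros eps.
  cut (locally_norm I (fun x => ball (L I) eps (L x))).
  { intros Hl. exact (@locally_le_locally_norm R_AbsRing X I _ Hl). }
  assert (He : 0 < eps / (C + 1)) by (apply Rdiv_lt_0_compat; [apply cond_pos| lra]).
  exists (mkposreal _ He). intros y Hy. unfold ball_norm in Hy. simpl in Hy.
  apply (@norm_compat1 R_AbsRing X). rewrite <- lin_minus by auto.
  assert (H1 := HB (minus y I)). assert (H2 := norm_ge_0 (minus y I)).
  eapply Rle_lt_trans; [exact H1|].
  apply Rle_lt_trans with ((C+1) * norm (minus y I)). nra.
  replace (pos eps) with ((C+1) * (eps / (C+1))) by (field; lra).
  apply Rmult_lt_compat_l. lra. exact Hy.
Qed.


Lemma mpp (a b a' b' : X) : minus (plus a b) (plus a' b') = plus (minus a a') (minus b b').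
Proof. exact (mppG a b a' b'). Qed.
Lemma mmm (a b a' b' : X) : minus (minus a b) (minus a' b') = minus (minus a a') (minus b b').
Proof. exact (mmmG a b a' b'). Qed.
Lemma msc (k : R) (a a' : X) : @minus (CompleteNormedModule.AbelianGroup R_AbsRing X) (scal k a) (scal k a') = scal k (minus a a').
Proof. exact (@mscG R_Ring _ k a a'). Qed.
Lemma mpc (a b c : X) : minus (plus a b) c = plus (minus a c) b.
Proof. exact (mpcG a b c). Qed.
Lemma mpr (a a' e : X) : minus (plus a e) (plus a' e) = minus a a'.
Proof. rewrite mpp. rewrite minus_eq_zero. apply plus_zero_r. Qed.
Lemma mpl (e a a' : X) : minus (plus e a) (plus e a') = minus a a'.
Proof. rewrite mpp. rewrite minus_eq_zero. apply plus_zero_l. Qed.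

Lemma norm_minus_le (a b : X) : norm (minus a b) <= norm a + norm b.
Proof. exact (norm_minus_leG a b). Qed.
Lemma norm_minus_sym (a b : X) : norm (minus a b) = norm (minus b a).
Proof. exact (norm_minus_symG a b). Qed.
Lemma norm_minus_tri (a b c : X) : norm (minus a c) <= norm (minus a b) + norm (minus b c).
Proof. exact (norm_minus_triG a b c). Qed.
Lemma norm_scal_le (r : R) (v : X) : norm (scal r v) <= Rabs r * norm v.
Proof. exact (norm_scal_leG r v). Qed.
Lemma eq_of_norm (a b : X) : (forall eps, 0 < eps -> norm (minus a b) <= eps) -> a = b.
Proof. exact (eq_of_normG a b). Qed.
Lemma norm_minus_self (a : X) : norm (minus a a) = 0.
Proof. exact (norm_minus_selfG a). Qed.
Lemma norm_plus_le (a b : X) : norm (plus a b) <= norm a + norm b.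
Proof. exact (norm_triangle a b). Qed.

Lemma norm_combo (u1 u2 u3 : X) (kk : R) : 0 <= kk ->
  norm (minus (plus u1 u2) (scal kk u3)) <= norm u1 + norm u2 + kk * norm u3.
Proof. exact (norm_comboG u1 u2 u3 kk). Qed.

Lemma cont_bounded T f : 0 <= T -> (forall t, 0 <= t <= T -> cont_in 0 T f t) ->
  exists B, 0 <= B /\ forall t, 0 <= t <= T -> norm (f t) <= B.
Proof.
  intros HT H.
  destruct (continuity_ab_maj (fun s => norm (f (clamp 0 T s))) 0 T HT) as [M [HM _]].
  { intros c Hc. apply continuity_pt_filterlim.
    apply (filterlim_comp _ _ _ (fun s => f (clamp 0 T s)) norm _ (locally (f (clamp 0 T c)))).
    apply cont_in_continuous; auto. apply (@filterlim_norm R_AbsRing X). }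
  exists (Rmax 0 (norm (f (clamp 0 T M)))). split. apply Rmax_l.
  intros t Ht. eapply Rle_trans. 2: apply Rmax_r.
  rewrite <- (clamp_id 0 T t Ht). apply HM; auto.
Qed.

Lemma cont_unif T f : 0 <= T -> (forall t, 0 <= t <= T -> cont_in 0 T f t) ->
  forall eps, 0 < eps -> exists d, 0 < d /\ forall s t, 0 <= s <= T -> 0 <= t <= T ->
    Rabs (s - t) < d -> norm (minus (f s) (f t)) < eps.
Proof.
  intros HT H eps Heps.
  destruct (unifcont_normed_1d (fun s => f (clamp 0 T s)) 0 T) with (eps := mkposreal _ Heps)
    as [d Hd].
  { intros x _. apply cont_in_continuous; auto. }
  exists d. split. apply cond_pos. intros s t Hs Ht Hst.
  assert (B := Hd t s Ht Hs Hst). unfold ball_norm in B. simpl in B.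
  rewrite !clamp_id in B; auto.
Qed.

Lemma geom_tele (u : nat -> X) c q : 0 <= q < 1 -> 0 <= c ->
  (forall n, norm (minus (u (S n)) (u n)) <= c * q ^ n) ->
  forall N m, norm (minus (u (N + m)%nat) (u N)) <= c * q ^ N * (1 - q ^ m) / (1 - q).
Proof.
  intros Hq Hc H N m. induction m as [|m IH].
  - rewrite Nat.add_0_r, norm_minus_self. simpl. unfold Rdiv.
    rewrite Rminus_diag, Rmult_0_r, Rmult_0_l. lra.
  - eapply Rle_trans. apply (norm_minus_tri _ (u (N + m)%nat)).
    replace (N + S m)%nat with (S (N + m)) by lia.
    eapply Rle_trans. apply Rplus_le_compat. apply H. apply IH.
    rewrite pow_add. simpl.
    assert (0 < 1 - q) by lra.
    apply Req_le. field. lra.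
Qed.

Definition limseq (u : nat -> X) : X := lim (filtermap u eventually).

Lemma geom_lim (u : nat -> X) c q : 0 <= q < 1 -> 0 <= c ->
  (forall n, norm (minus (u (S n)) (u n)) <= c * q ^ n) ->
  forall N, norm (minus (u N) (limseq u)) <= c * q ^ N / (1 - q).
Proof.
  intros Hq Hc H.
  assert (HT := geom_tele u c q Hq Hc H).
  assert (Hq1 : 0 < 1 - q) by lra.
  assert (Htail : forall N m, norm (minus (u (N + m)%nat) (u N)) <= c * q ^ N / (1 - q)).
  { intros N m. eapply Rle_trans. apply HT. unfold Rdiv.
    apply Rmult_le_compat_r. apply Rlt_le, Rinv_0_lt_compat; auto.
    assert (0 <= q ^ N) by (apply pow_le; lra). assert (0 <= q ^ m) by (apply pow_le; lra).
    assert (0 <= c * q ^ N) by (apply Rmult_le_pos; lra). nra. }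
  assert (Hp : ProperFilter (filtermap u eventually)).
  { apply filtermap_proper_filter. apply eventually_filter. }
  assert (Hc' : cauchy (filtermap u eventually)).
  { intros eps.
    destruct (pow_lt_1_zero q) with (y := eps * (1 - q) / (c + 1)) as [N HN].
    { rewrite Rabs_pos_eq; lra. }
    { apply Rdiv_lt_0_compat. apply Rmult_lt_0_compat. apply cond_pos. lra. lra. }
    exists (u N). exists N. intros n Hn.
    apply (@norm_compat1 R_AbsRing X).
    replace n with (N + (n - N))%nat by lia.
    eapply Rle_lt_trans. apply Htail.
    specialize (HN N (le_n N)). rewrite Rabs_pos_eq in HN by (apply pow_le; lra).
    apply Rmult_lt_reg_r with (1 - q). lra. unfold Rdiv. rewrite Rmult_assoc, Rinv_l by lra.
    rewrite Rmult_1_r.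
    assert (0 <= q ^ N) by (apply pow_le; lra).
    assert (c * q ^ N <= (c + 1) * q ^ N) by nra.
    assert ((c+1) * q ^ N < eps * (1 - q)).
    { apply Rmult_lt_reg_r with (/ (c + 1)). apply Rinv_0_lt_compat; lra.
      replace ((c + 1) * q ^ N * / (c + 1)) with (q ^ N) by (field; lra). exact HN. }
    lra. }
  intros N. apply Rle_plus_epsilon. intros eps Heps.
  assert (Hnf := @norm_factor_gt_0 _ X).
  assert (He : 0 < eps / (@norm_factor _ X)) by (apply Rdiv_lt_0_compat; auto).
  destruct (complete_cauchy _ Hp Hc' (mkposreal _ He)) as [N0 HN0].
  specialize (HN0 (N + N0)%nat ltac:(lia)).
  apply (@norm_compat2 R_AbsRing X) in HN0. simpl in HN0.
  replace (norm_factor * (eps / norm_factor)) with eps in HN0 by (field; lra).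
  eapply Rle_trans. apply (norm_minus_tri _ (u (N + N0)%nat)).

  assert (HN0' : norm (minus (u (N + N0)%nat) (limseq u)) < eps) by exact HN0.
  rewrite norm_minus_sym. specialize (Htail N N0). lra.
Qed.

Lemma unif_lim_cont T (fn : nat -> R -> X) f (e : nat -> R) :
  (forall n t, 0 <= t <= T -> cont_in 0 T (fn n) t) ->
  (forall n s, 0 <= s <= T -> norm (minus (fn n s) (f s)) <= e n) ->
  (forall eps, 0 < eps -> exists n, e n < eps) ->
  forall t, 0 <= t <= T -> cont_in 0 T f t.
Proof.
  intros Hc Hb He t Ht eps Heps.
  destruct (He (eps / 3)) as [n Hn]. lra.
  destruct (Hc n t Ht (eps / 3)) as [d [Hd Hs]]. lra.
  exists d. split; auto. intros s Hs1 Hs2.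
  eapply Rle_lt_trans. apply (norm_minus_tri _ (fn n s)).
  eapply Rle_lt_trans. apply Rplus_le_compat_l. apply (norm_minus_tri _ (fn n t)).
  assert (A1 := Hb n s Hs1). rewrite norm_minus_sym in A1.
  assert (A2 := Hs s Hs1 Hs2). assert (A3 := Hb n t Ht). lra.
Qed.

End Gen.

Lemma exp_le_mono x y : x <= y -> exp x <= exp y.
Proof. intros H. destruct (Rle_lt_or_eq_dec _ _ H). left; apply exp_increasing; auto. subst; lra. Qed.

Lemma small_prod P x eps : 0 <= P -> 0 < eps -> 0 <= x -> x <= eps / (2 * (P + 1)) -> P * x < eps / 2.
Proof.
  intros HP He Hx H.
  apply Rle_lt_trans with (P * (eps / (2 * (P + 1)))). apply Rmult_le_compat_l; auto.
  apply Rmult_lt_reg_r with (2 * (P + 1)). lra.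
  replace (P * (eps / (2 * (P + 1))) * (2 * (P + 1))) with (P * eps) by (field; lra).
  nra.
Qed.

Lemma is_RInt_const_R (a b c : R) : is_RInt (fun _ => c) a b ((b - a) * c).
Proof. exact (is_RInt_const a b c). Qed.
Lemma is_RInt_scal_R (f : R -> R) a b k l : is_RInt f a b l -> is_RInt (fun x => k * f x) a b (k * l).
Proof. intros H. exact (is_RInt_scal f a b k l H). Qed.
Lemma is_RInt_plus_R (f g : R -> R) a b l1 l2 : is_RInt f a b l1 -> is_RInt g a b l2 -> is_RInt (fun x => f x + g x) a b (l1 + l2).
Proof. intros H1 H2. exact (is_RInt_plus f g a b l1 l2 H1 H2). Qed.

Lemma is_RInt_derive_R (f df : R -> R) a b :
  (forall x, Rmin a b <= x <= Rmax a b -> is_derive f x (df x)) ->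
  (forall x, Rmin a b <= x <= Rmax a b -> continuous df x) ->
  is_RInt df a b (f b - f a).
Proof. intros H1 H2. exact (is_RInt_derive f df a b H1 H2). Qed.

Lemma exp_int (theta t T : R) : 0 <= theta -> 0 <= t <= T ->
  exists V, is_RInt (fun s => exp (theta * (t - s))) 0 t V /\ 0 <= V /\
    V <= qplus theta T /\ V <= exp (theta * t) * qminus theta T.
Proof.
  intros Hth Ht. unfold qplus, qminus.
  destruct (Req_EM_T theta 0) as [E|E].
  - subst theta. exists t. split.
    + apply is_RInt_ext with (f := fun _ => 1).
      { intros x _. rewrite Rmult_0_l, exp_0. reflexivity. }
      replace t with ((t - 0) * 1) at 2 by ring. apply is_RInt_const_R.
    + rewrite Rmult_0_l, exp_0. lra.
  - assert (Hp : 0 < theta) by lra.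
    exists ((exp (theta * t) - 1) / theta). split.
    + replace ((exp (theta * t) - 1) / theta) with
        (((fun s => - exp (theta * (t - s)) / theta) t) - ((fun s => - exp (theta * (t - s)) / theta) 0)).
      2: { simpl. replace (t - t) with 0 by ring.
           rewrite Rmult_0_r, exp_0. replace (t - 0) with t by ring. field. lra. }
      apply (is_RInt_derive_R (fun s => - exp (theta * (t - s)) / theta)).
      * intros x _. auto_derive. auto. replace (t + - x) with (t - x) by ring. field. lra.
      * intros x _. apply (@ex_derive_continuous R_AbsRing R_NormedModule). auto_derive. auto.
    + split.
      * apply Rdiv_le_0_compat; auto.
        assert (exp 0 <= exp (theta * t)) by (apply exp_le_mono; nra). rewrite exp_0 in H. lra.
      * split.
        -- unfold Rdiv. apply Rmult_le_compat_r. left; apply Rinv_0_lt_compat; auto.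
           assert (exp (theta * t) <= exp (theta * T)) by (apply exp_le_mono; nra). lra.
        -- unfold Rdiv. rewrite <- Rmult_assoc. apply Rmult_le_compat_r. left; apply Rinv_0_lt_compat; auto.
           rewrite Rmult_minus_distr_l, Rmult_1_r, <- exp_plus.
           assert (exp (theta * t + - (theta * T)) <= exp 0) by (apply exp_le_mono; nra).
           rewrite exp_0 in H. lra.
Qed.

Lemma norm_RInt_const_le {X : CompleteNormedModule R_AbsRing} (f : R -> X) a b lf M : a <= b ->
  (forall x, a <= x <= b -> norm (f x) <= M) -> is_RInt f a b lf -> norm lf <= (b - a) * M.
Proof.
  intros Hab H Hf. apply (norm_RInt_le f (fun _ => M) a b lf ((b-a)*M) Hab H Hf). apply is_RInt_const_R.
Qed.

Section SG.
Context {X : CompleteNormedModule R_AbsRing} (S : R -> X -> X) (T CA : R)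
  (HT : 0 < T) (HCA : 0 <= CA)
  (HS0 : forall u, S 0 u = u)
  (HSadd : forall t s u, 0 <= t -> 0 <= s -> S (t + s) u = S t (S s u))
  (HSlin : forall t, 0 <= t -> linop (S t))
  (HSb : forall t u, 0 <= t <= 2 * T -> norm (S t u) <= CA * norm u)
  (HSr : forall u, filterlim (fun t => S t u) (at_right 0) (locally u)).

Lemma S_lin_minus t u v : 0 <= t -> S t (minus u v) = minus (S t u) (S t v).
Proof. intros. apply lin_minus; auto. Qed.

Lemma S_cont u r0 : 0 <= r0 <= T -> cont_in 0 T (fun r => S r u) r0.
Proof.
  intros Hr0 eps Heps.
  assert (Hnf := @norm_factor_gt_0 _ X).
  assert (He' : 0 < eps / ((CA + 1) * (@norm_factor _ X))).
  { apply Rdiv_lt_0_compat; auto. apply Rmult_lt_0_compat; lra. }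
  destruct (proj1 (filterlim_locally _ _) (HSr u) (mkposreal _ He')) as [d Hd].
  assert (Hk : forall h, 0 < h -> h < d -> norm (minus (S h u) u) < eps / (CA + 1)).
  { intros h H1 H2. assert (Hb : ball 0 d h).
    { change (Rabs (h - 0) < d). rewrite Rminus_0_r, Rabs_pos_eq; lra. }
    assert (B := Hd h Hb H1). apply (@norm_compat2 R_AbsRing X) in B. simpl in B.
    replace (norm_factor * (eps / ((CA + 1) * norm_factor))) with (eps / (CA + 1)) in B
      by (field; lra). exact B. }
  exists d. split. apply cond_pos. intros r Hr Hrd. simpl.
  assert (Hlt : forall r1 r2, 0 <= r1 -> r1 < r2 -> r2 <= T -> r2 - r1 < d ->
    norm (minus (S r2 u) (S r1 u)) < eps).
  { intros r1 r2 H1 H2 H3 H4.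
    replace r2 with (r1 + (r2 - r1)) by ring. rewrite HSadd by lra.
    rewrite <- S_lin_minus by lra.
    eapply Rle_lt_trans. apply HSb. lra.
    assert (Hk' := Hk (r2 - r1) ltac:(lra) H4).
    assert (0 <= norm (minus (S (r2 - r1) u) u)) by apply norm_ge_0.
    apply Rle_lt_trans with (CA * (eps / (CA + 1))). apply Rmult_le_compat_l; lra.
    apply Rmult_lt_reg_r with (CA + 1). lra.
    replace (CA * (eps / (CA + 1)) * (CA + 1)) with (CA * eps) by (field; lra). nra. }
  destruct (Rtotal_order r r0) as [H|[H|H]].
  - rewrite norm_minus_sym. apply Hlt; try lra. rewrite Rabs_left in Hrd; lra.
  - subst. rewrite norm_minus_self. lra.
  - apply Hlt; try lra. rewrite Rabs_pos_eq in Hrd; lra.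
Qed.

Definition gcont (g : R -> X) := forall s, 0 <= s <= T -> cont_in 0 T g s.

Lemma integrand_cont g t : 0 <= t <= T -> gcont g ->
  forall s0, 0 <= s0 <= t -> cont_in 0 t (fun s => S s (g (t - s))) s0.
Proof.
  intros Ht Hg s0 Hs0 eps Heps.
  assert (He1 : 0 < eps / 2 / (CA + 1)) by (apply Rdiv_lt_0_compat; lra).
  destruct (Hg (t - s0) ltac:(lra) _ He1) as [d1 [Hd1 H1]].
  destruct (S_cont (g (t - s0)) s0 ltac:(lra) (eps / 2) ltac:(lra)) as [d2 [Hd2 H2]].
  exists (Rmin d1 d2). split. apply Rmin_pos; auto.
  intros s Hs Hsd. simpl.
  assert (Hd1' : Rabs (s - s0) < d1) by (eapply Rlt_le_trans; [exact Hsd| apply Rmin_l]).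
  assert (Hd2' : Rabs (s - s0) < d2) by (eapply Rlt_le_trans; [exact Hsd| apply Rmin_r]).
  eapply Rle_lt_trans. apply (norm_minus_tri _ (S s (g (t - s0)))).
  rewrite <- S_lin_minus by lra.
  assert (A := HSb s (minus (g (t - s)) (g (t - s0))) ltac:(lra)).
  assert (B := H1 (t - s) ltac:(lra)).
  replace (t - s - (t - s0)) with (- (s - s0)) in B by ring. rewrite Rabs_Ropp in B.
  specialize (B Hd1'). simpl in H2. specialize (H2 s ltac:(lra) Hd2').
  assert (CA * norm (minus (g (t - s)) (g (t - s0))) <= CA * (eps / 2 / (CA + 1))).
  { apply Rmult_le_compat_l; lra. }
  assert (CA * (eps / 2 / (CA + 1)) < eps / 2).
  { apply Rmult_lt_reg_r with (CA + 1). lra.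
    replace (CA * (eps / 2 / (CA + 1)) * (CA + 1)) with (CA * (eps / 2)) by (field; lra). nra. }
  lra.
Qed.

Lemma integrand_ex g t a b : 0 <= a <= b -> b <= t -> t <= T -> gcont g ->
  ex_RInt (fun s => S s (g (t - s))) a b.
Proof.
  intros Hab Hbt HtT Hg. apply ex_RInt_within. lra.
  intros s Hs. apply cont_in_sub with 0 t; try lra.
  apply integrand_cont; auto; lra.
Qed.

Definition K (g : R -> X) (t : R) : X := RInt (fun s => S s (g (t - s))) 0 t.

Lemma K_is g t : 0 <= t <= T -> gcont g -> is_RInt (fun s => S s (g (t - s))) 0 t (K g t).
Proof. intros. apply RInt_correct. apply integrand_ex; auto; lra. Qed.

Lemma K_zero g : K g 0 = zero.
Proof. apply RInt_point. Qed.


Lemma K_diff g B w t1 t2 : gcont g -> (forall s, 0 <= s <= T -> norm (g s) <= B) ->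
  0 <= t1 <= t2 -> t2 <= T ->
  (forall s, 0 <= s <= t1 -> norm (minus (g (t2 - s)) (g (t1 - s))) <= w) ->
  norm (minus (K g t2) (K g t1)) <= CA * B * (t2 - t1) + CA * w * t1.
Proof.
  intros Hg HB Ht12 Ht2 Hw.
  set (h2 := fun s => S s (g (t2 - s))).
  assert (Ha : is_RInt h2 0 t1 (RInt h2 0 t1)) by (apply RInt_correct; apply integrand_ex; auto; lra).
  assert (Hb : is_RInt h2 t1 t2 (RInt h2 t1 t2)) by (apply RInt_correct; apply integrand_ex; auto; lra).
  assert (E : K g t2 = plus (RInt h2 0 t1) (RInt h2 t1 t2)).
  { apply (@is_RInt_unique X). exact (is_RInt_Chasles h2 0 t1 t2 _ _ Ha Hb). }
  rewrite E, mpc.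
  eapply Rle_trans. apply norm_plus_le.
  assert (I1 := is_RInt_minus h2 (fun s => S s (g (t1 - s))) 0 t1 _ _ Ha (K_is g t1 ltac:(lra) Hg)).
  assert (H1 : norm (minus (RInt h2 0 t1) (K g t1)) <= (t1 - 0) * (CA * w)).
  { refine (norm_RInt_const_le _ 0 t1 _ (CA * w) _ _ I1). lra.
    intros s Hs. unfold h2. rewrite <- S_lin_minus by lra.
    apply Rle_trans with (CA * norm (minus (g (t2 - s)) (g (t1 - s)))). apply HSb; lra.
    apply Rmult_le_compat_l. exact HCA. exact (Hw s ltac:(lra)). }
  assert (H2 : norm (RInt h2 t1 t2) <= (t2 - t1) * (CA * B)).
  { refine (norm_RInt_const_le _ t1 t2 _ (CA * B) _ _ Hb). lra.
    intros s Hs. unfold h2.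
    apply Rle_trans with (CA * norm (g (t2 - s))). apply HSb; lra.
    apply Rmult_le_compat_l. exact HCA. exact (HB (t2 - s) ltac:(lra)). }
  lra.
Qed.

Lemma K_cont g : gcont g -> gcont (K g).
Proof.
  intros Hg t Ht eps Heps.
  destruct (cont_bounded T g ltac:(lra) Hg) as [B [HB0 HB]].
  assert (Hw : 0 < eps / (2 * (CA * T + 1))).
  { apply Rdiv_lt_0_compat; auto. assert (0 <= CA * T) by nra. lra. }
  destruct (cont_unif T g ltac:(lra) Hg _ Hw) as [d1 [Hd1 H1]].
  assert (Hd2 : 0 < eps / (2 * (CA * B + 1))).
  { apply Rdiv_lt_0_compat; auto. assert (0 <= CA * B) by nra. lra. }
  exists (Rmin d1 (eps / (2 * (CA * B + 1)))). split. apply Rmin_pos; auto.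
  intros s Hs Hsd.
  assert (Hd1' : Rabs (s - t) < d1) by (eapply Rlt_le_trans; [exact Hsd| apply Rmin_l]).
  assert (Hd2' : Rabs (s - t) < eps / (2 * (CA * B + 1))) by (eapply Rlt_le_trans; [exact Hsd| apply Rmin_r]).
  assert (Hgen : forall t1 t2, 0 <= t1 <= t2 -> t2 <= T -> t2 - t1 < d1 ->
     t2 - t1 < eps / (2 * (CA * B + 1)) -> norm (minus (K g t2) (K g t1)) < eps).
  { intros t1 t2 Ht12 Ht2 Hd Hd'.
    eapply Rle_lt_trans. apply (K_diff g B (eps / (2 * (CA * T + 1)))); auto.
    { intros u Hu. left. apply H1; try lra.
      replace (t2 - u - (t1 - u)) with (t2 - t1) by ring. rewrite Rabs_pos_eq; lra. }
    assert (A1 : (CA * B) * (t2 - t1) < eps / 2).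
    { apply small_prod; try lra. nra. }
    assert (A2 : (CA * T) * (eps / (2 * (CA * T + 1))) < eps / 2).
    { apply small_prod; try lra. nra. }
    assert (A3 : CA * (eps / (2 * (CA * T + 1))) * t1 <= (CA * T) * (eps / (2 * (CA * T + 1)))).
    { assert (0 <= CA * (eps / (2 * (CA * T + 1)))) by (apply Rmult_le_pos; lra). nra. }
    lra. }
  destruct (Rle_dec t s).
  - apply Hgen; try lra. rewrite Rabs_pos_eq in Hd1'; lra. rewrite Rabs_pos_eq in Hd2'; lra.
  - rewrite norm_minus_sym. apply Hgen; try lra. rewrite Rabs_left in Hd1'; lra. rewrite Rabs_left in Hd2'; lra.
Qed.

Lemma plus_cont f1 f2 : gcont f1 -> gcont f2 -> gcont (fun t => plus (f1 t) (f2 t)).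
Proof.
  intros H1 H2 t Ht eps Heps.
  destruct (H1 t Ht (eps / 2) ltac:(lra)) as [d1 [Hd1 A1]].
  destruct (H2 t Ht (eps / 2) ltac:(lra)) as [d2 [Hd2 A2]].
  exists (Rmin d1 d2). split. apply Rmin_pos; auto.
  intros s Hs Hsd. rewrite mpp. eapply Rle_lt_trans. apply norm_plus_le.
  assert (B1 := A1 s Hs ltac:(eapply Rlt_le_trans; [exact Hsd| apply Rmin_l])).
  assert (B2 := A2 s Hs ltac:(eapply Rlt_le_trans; [exact Hsd| apply Rmin_r])).
  lra.
Qed.

Lemma Sc_cont c : gcont (fun t => S t c).
Proof. intros t Ht. apply S_cont; auto. Qed.

Lemma K_est tau f f' al be theta t V : 0 <= tau <= T -> 0 <= t <= T -> gcont f -> gcont f' ->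
  0 <= al -> 0 <= be ->
  (forall s, 0 <= s <= T -> norm (minus (f s) (f' s)) <= al + be * exp (theta * s)) ->
  is_RInt (fun s => exp (theta * (t - s))) 0 t V ->
  norm (S tau (minus (K f t) (K f' t))) <= CA * ((t - 0) * al + be * V).
Proof.
  intros Htau Ht Hf Hf' Hal Hbe Hd HV.
  assert (I0 := is_RInt_minus _ _ 0 t _ _ (K_is f t Ht Hf) (K_is f' t Ht Hf')).
  assert (H1 : is_RInt (fun s => S s (minus (f (t - s)) (f' (t - s)))) 0 t (minus (K f t) (K f' t))).
  { refine (is_RInt_ext _ _ 0 t _ _ I0).
    intros x Hx. rewrite Rmin_left in Hx by lra. simpl. rewrite S_lin_minus by lra. reflexivity. }
  apply (is_RInt_lin (S tau) CA) in H1; auto.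
  2: apply HSlin; lra.
  2: intros u; apply HSb; lra.
  assert (Hg : is_RInt (fun s => CA * (al + be * exp (theta * (t - s)))) 0 t (CA * ((t - 0) * al + be * V))).
  { apply is_RInt_scal_R. apply is_RInt_plus_R. apply is_RInt_const_R. apply is_RInt_scal_R. exact HV. }
  refine (norm_RInt_le _ _ 0 t _ _ ltac:(lra) _ H1 Hg).
  intros s Hs. simpl. rewrite <- HSadd by lra.
  apply Rle_trans with (CA * norm (minus (f (t - s)) (f' (t - s)))). apply HSb; lra.
  apply Rmult_le_compat_l. exact HCA.
  exact (Hd (t - s) ltac:(lra)).
Qed.


Context (F G : X -> X -> X) (a b k a11 a12 a21 a22 theta : R) (beta : X)
  (Ha : 0 < a) (Hk : 0 < k) (Ha11 : 0 <= a11) (Ha12 : 0 <= a12) (Ha21 : 0 <= a21) (Ha22 : 0 <= a22)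
  (Hth : 0 <= theta)
  (HF : forall x xb y yb : X,
      norm (minus (F x y) (F xb yb)) <= a11 * norm (minus x xb) + a12 * norm (minus y yb))
  (HG : forall x xb y yb : X,
      norm (minus (G x y) (G xb yb)) <= a21 * norm (minus x xb) + a22 * norm (minus y yb)).

Definition fF (x y : R -> X) (s : R) : X := F (x s) (y s).
Definition fG (x y : R -> X) (s : R) : X := G (x s) (y s).

Definition cpt (x y : R -> X) : X :=
  scal (/ a) (plus (minus (plus (S T (x 0)) (K (fF x y) T))
                          (scal k (plus (S T beta) (K (fG x y) T))))
                   (scal (k * b) beta)).

Definition N1 (x y : R -> X) (t : R) : X := plus (S t (cpt x y)) (K (fF x y) t).
Definition N2 (x y : R -> X) (t : R) : X := plus (S t beta) (K (fG x y) t).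

Lemma lip_cont (H : X -> X -> X) c1 c2 x y : 0 <= c1 -> 0 <= c2 ->
  (forall x xb y yb : X, norm (minus (H x y) (H xb yb)) <= c1 * norm (minus x xb) + c2 * norm (minus y yb)) ->
  gcont x -> gcont y -> gcont (fun s => H (x s) (y s)).
Proof.
  intros H1 H2 HH Hx Hy t Ht eps Heps.
  assert (E1 : 0 < eps / (2 * (c1 + 1))) by (apply Rdiv_lt_0_compat; lra).
  assert (E2 : 0 < eps / (2 * (c2 + 1))) by (apply Rdiv_lt_0_compat; lra).
  destruct (Hx t Ht _ E1) as [d1 [Hd1 A1]].
  destruct (Hy t Ht _ E2) as [d2 [Hd2 A2]].
  exists (Rmin d1 d2). split. apply Rmin_pos; auto.
  intros s Hs Hsd.
  assert (B1 := A1 s Hs ltac:(eapply Rlt_le_trans; [exact Hsd| apply Rmin_l])).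
  assert (B2 := A2 s Hs ltac:(eapply Rlt_le_trans; [exact Hsd| apply Rmin_r])).
  eapply Rle_lt_trans. apply HH.
  assert (0 <= norm (minus (x s) (x t))) by apply norm_ge_0.
  assert (0 <= norm (minus (y s) (y t))) by apply norm_ge_0.
  assert (c1 * norm (minus (x s) (x t)) < eps / 2) by (apply small_prod; lra).
  assert (c2 * norm (minus (y s) (y t)) < eps / 2) by (apply small_prod; lra).
  lra.
Qed.

Lemma fF_cont x y : gcont x -> gcont y -> gcont (fF x y).
Proof. intros. apply (lip_cont F a11 a12); auto. Qed.
Lemma fG_cont x y : gcont x -> gcont y -> gcont (fG x y).
Proof. intros. apply (lip_cont G a21 a22); auto. Qed.

Lemma N1_cont x y : gcont x -> gcont y -> gcont (N1 x y).
Proof. intros. apply plus_cont. apply Sc_cont. apply K_cont. apply fF_cont; auto. Qed.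
Lemma N2_cont x y : gcont x -> gcont y -> gcont (N2 x y).
Proof. intros. apply plus_cont. apply Sc_cont. apply K_cont. apply fG_cont; auto. Qed.


Definition MM := Mtheta CA a k T a11 a12 a21 a22 theta.

Lemma qplus_ge0 : 0 <= qplus theta T.
Proof.
  destruct (exp_int theta T T Hth ltac:(lra)) as [V [_ [H0 [H1 _]]]]. lra.
Qed.
Lemma qminus_ge0 : 0 <= qminus theta T.
Proof.
  unfold qminus. destruct Req_EM_T. lra. apply Rdiv_le_0_compat. 2: lra.
  assert (exp (- (theta * T)) <= exp 0) by (apply exp_le_mono; nra). rewrite exp_0 in H. lra.
Qed.

Lemma dF_bound x y x' y' p r :
  (forall t, 0 <= t <= T -> norm (minus (x t) (x' t)) <= p /\ norm (minus (y t) (y' t)) <= r * exp (theta * t)) ->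
  forall s, 0 <= s <= T -> norm (minus (fF x y s) (fF x' y' s)) <= a11 * p + (a12 * r) * exp (theta * s).
Proof.
  intros H s Hs. unfold fF. eapply Rle_trans. apply HF. destruct (H s Hs) as [A1 A2].
  apply Rplus_le_compat. apply Rmult_le_compat_l; auto.
  rewrite Rmult_assoc. apply Rmult_le_compat_l; auto.
Qed.
Lemma dG_bound x y x' y' p r :
  (forall t, 0 <= t <= T -> norm (minus (x t) (x' t)) <= p /\ norm (minus (y t) (y' t)) <= r * exp (theta * t)) ->
  forall s, 0 <= s <= T -> norm (minus (fG x y s) (fG x' y' s)) <= a21 * p + (a22 * r) * exp (theta * s).
Proof.
  intros H s Hs. unfold fG. eapply Rle_trans. apply HG. destruct (H s Hs) as [A1 A2].
  apply Rplus_le_compat. apply Rmult_le_compat_l; auto.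
  rewrite Rmult_assoc. apply Rmult_le_compat_l; auto.
Qed.

Lemma Ndiff x y x' y' p r : gcont x -> gcont y -> gcont x' -> gcont y' -> 0 <= p -> 0 <= r ->
  (forall t, 0 <= t <= T -> norm (minus (x t) (x' t)) <= p /\ norm (minus (y t) (y' t)) <= r * exp (theta * t)) ->
  forall t, 0 <= t <= T ->
    norm (minus (N1 x y t) (N1 x' y' t)) <= m11 MM * p + m12 MM * r /\
    norm (minus (N2 x y t) (N2 x' y' t)) <= (m21 MM * p + m22 MM * r) * exp (theta * t).
Proof.
  intros Hx Hy Hx' Hy' Hp Hr H t Ht.
  assert (HfF := fF_cont x y Hx Hy). assert (HfF' := fF_cont x' y' Hx' Hy').
  assert (HfG := fG_cont x y Hx Hy). assert (HfG' := fG_cont x' y' Hx' Hy').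
  assert (DF := dF_bound x y x' y' p r H). assert (DG := dG_bound x y x' y' p r H).
  assert (Hap : 0 <= a11 * p) by nra. assert (Hbr : 0 <= a12 * r) by nra.
  assert (Hap2 : 0 <= a21 * p) by nra. assert (Hbr2 : 0 <= a22 * r) by nra.
  destruct (exp_int theta t T Hth Ht) as [Vt [HVt [HVt0 [HVt1 HVt2]]]].
  destruct (exp_int theta T T Hth ltac:(lra)) as [VT [HVT [HVT0 [HVT1 HVT2]]]].
  assert (Qp := qplus_ge0). assert (Qm := qminus_ge0).
  assert (Hexp : 1 <= exp (theta * t)).
  { rewrite <- exp_0. apply exp_le_mono. nra. }
  unfold MM, Mtheta; simpl.
  split.
  - unfold N1. rewrite mpp. eapply Rle_trans. apply norm_plus_le.
    assert (EK := K_est 0 (fF x y) (fF x' y') _ _ theta t Vt ltac:(lra) Ht HfF HfF' Hap Hbr DF HVt).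
    rewrite HS0 in EK.
    assert (Ec : norm (S t (minus (cpt x y) (cpt x' y'))) <=
       / a * (CA * p + CA * ((T - 0) * (a11 * p) + a12 * r * VT) + k * (CA * ((T - 0) * (a21 * p) + a22 * r * VT)))).
    { assert (Eq : minus (cpt x y) (cpt x' y') = scal (/ a) (minus (plus (minus (S T (x 0)) (S T (x' 0)))
           (minus (K (fF x y) T) (K (fF x' y') T))) (scal k (minus (K (fG x y) T) (K (fG x' y') T))))).
      { exact (cpt_diff_eqG _ _ _ _ _ _ _ _ _ _). }
      rewrite Eq. rewrite (proj2 (HSlin t ltac:(lra))).
      eapply Rle_trans. apply norm_scal_le.
      rewrite Rabs_pos_eq by (left; apply Rinv_0_lt_compat; auto).
      apply Rmult_le_compat_l. left; apply Rinv_0_lt_compat; auto.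
      rewrite lin_combo by (apply HSlin; lra).
      eapply Rle_trans. apply norm_combo. lra.
      assert (E1 : norm (S t (minus (S T (x 0)) (S T (x' 0)))) <= CA * p).
      { rewrite <- S_lin_minus by lra. rewrite <- HSadd by lra.
        eapply Rle_trans. apply HSb. lra. apply Rmult_le_compat_l; auto.
        apply (H 0). lra. }
      assert (E2 := K_est t (fF x y) (fF x' y') _ _ theta T VT ltac:(lra) ltac:(lra) HfF HfF' Hap Hbr DF HVT).
      assert (E3 := K_est t (fG x y) (fG x' y') _ _ theta T VT ltac:(lra) ltac:(lra) HfG HfG' Hap2 Hbr2 DG HVT).
      assert (k * norm (S t (minus (K (fG x y) T) (K (fG x' y') T))) <=
              k * (CA * ((T - 0) * (a21 * p) + a22 * r * VT))) by (apply Rmult_le_compat_l; lra).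
      lra. }
    assert (B1 : CA * ((T - 0) * (a11 * p) + a12 * r * VT) <= CA * (T * a11 * p + a12 * r * qplus theta T)).
    { apply Rmult_le_compat_l; auto. assert (a12 * r * VT <= a12 * r * qplus theta T) by (apply Rmult_le_compat_l; lra). nra. }
    assert (B2 : CA * ((T - 0) * (a21 * p) + a22 * r * VT) <= CA * (T * a21 * p + a22 * r * qplus theta T)).
    { apply Rmult_le_compat_l; auto. assert (a22 * r * VT <= a22 * r * qplus theta T) by (apply Rmult_le_compat_l; lra). nra. }
    assert (B3 : CA * ((t - 0) * (a11 * p) + a12 * r * Vt) <= CA * (T * a11 * p + a12 * r * qplus theta T)).
    { apply Rmult_le_compat_l; auto. assert (a12 * r * Vt <= a12 * r * qplus theta T) by (apply Rmult_le_compat_l; lra).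
      assert ((t - 0) * (a11 * p) <= T * a11 * p) by nra. lra. }
    assert (B4 : / a * (CA * p + CA * ((T - 0) * (a11 * p) + a12 * r * VT) + k * (CA * ((T - 0) * (a21 * p) + a22 * r * VT)))
             <= / a * (CA * p + CA * (T * a11 * p + a12 * r * qplus theta T) + k * (CA * (T * a21 * p + a22 * r * qplus theta T)))).
    { apply Rmult_le_compat_l. left; apply Rinv_0_lt_compat; auto.
      assert (k * (CA * ((T - 0) * (a21 * p) + a22 * r * VT)) <= k * (CA * (T * a21 * p + a22 * r * qplus theta T)))
        by (apply Rmult_le_compat_l; lra). lra. }
    apply Rle_trans with (/ a * (CA * p + CA * (T * a11 * p + a12 * r * qplus theta T) + k * (CA * (T * a21 * p + a22 * r * qplus theta T)))
       + CA * (T * a11 * p + a12 * r * qplus theta T)).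
    rewrite <- S_lin_minus by lra. lra.
    apply Req_le. field. lra.
  - unfold N2. rewrite mpl.
    assert (EK := K_est 0 (fG x y) (fG x' y') _ _ theta t Vt ltac:(lra) Ht HfG HfG' Hap2 Hbr2 DG HVt).
    rewrite HS0 in EK. eapply Rle_trans. exact EK.
    assert (C1 : (t - 0) * (a21 * p) <= T * a21 * p * exp (theta * t)).
    { assert (0 <= T * a21 * p) by nra. assert ((t - 0) * (a21 * p) <= T * a21 * p) by nra. nra. }
    assert (C2 : a22 * r * Vt <= a22 * r * (exp (theta * t) * qminus theta T)) by (apply Rmult_le_compat_l; lra).
    apply Rle_trans with (CA * (T * a21 * p * exp (theta * t) + a22 * r * (exp (theta * t) * qminus theta T))).
    apply Rmult_le_compat_l; auto. lra.
    apply Req_le. ring.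
Qed.


Definition w1 := 1 - m22 MM + m12 MM.
Definition w2 := 1 - m11 MM + m21 MM.
Definition DD := (1 - m11 MM) * (1 - m22 MM) - m12 MM * m21 MM.
Definition qq := Rmax (1 - DD / w1) (1 - DD / w2).

Lemma MM_nonneg : 0 <= m11 MM /\ 0 <= m12 MM /\ 0 <= m21 MM /\ 0 <= m22 MM.
Proof.
  assert (Qp := qplus_ge0). assert (Qm := qminus_ge0).
  unfold MM, Mtheta; simpl.
  assert (0 < / a) by (apply Rinv_0_lt_compat; auto).
  unfold Rdiv. rewrite !Rmult_1_l.
  assert (0 <= T * a11) by nra. assert (0 <= k * / a) by nra.
  repeat split; try apply Rmult_le_pos; try nra.
  assert (0 <= (1 + / a) * T * a11) by nra. assert (0 <= k * / a * T * a21) by (apply Rmult_le_pos; nra). lra.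
  apply Rmult_le_pos; [|exact Qp].
  assert (0 <= (1 + / a) * a12) by (apply Rmult_le_pos; lra). assert (0 <= k * / a * a22) by (apply Rmult_le_pos; [apply Rmult_le_pos|]; lra). lra.
Qed.

Section Weights.
Hypothesis (Hm11 : m11 MM < 1) (Hm22 : m22 MM < 1) (HD : 0 < DD).

Lemma w_pos : 0 < w1 /\ 0 < w2.
Proof. destruct MM_nonneg as [? [? [? ?]]]. unfold w1, w2. lra. Qed.

Lemma qq_props : 0 <= qq < 1 /\ m11 MM * w1 + m12 MM * w2 <= qq * w1 /\ m21 MM * w1 + m22 MM * w2 <= qq * w2.
Proof.
  destruct w_pos as [P1 P2]. destruct MM_nonneg as [N1' [N2' [N3 N4]]].
  assert (E1 : m11 MM * w1 + m12 MM * w2 = (1 - DD / w1) * w1).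
  { unfold DD, w1, w2 in *. field. lra. }
  assert (E2 : m21 MM * w1 + m22 MM * w2 = (1 - DD / w2) * w2).
  { unfold DD, w1, w2 in *. field. lra. }
  assert (G1 : 0 <= 1 - DD / w1).
  { apply Rmult_le_reg_r with w1; auto. rewrite <- E1. rewrite Rmult_0_l.
    assert (0 <= m11 MM * w1) by nra. assert (0 <= m12 MM * w2) by nra. lra. }
  assert (L1 : 1 - DD / w1 < 1).
  { assert (0 < DD / w1) by (apply Rdiv_lt_0_compat; auto). lra. }
  assert (L2 : 1 - DD / w2 < 1).
  { assert (0 < DD / w2) by (apply Rdiv_lt_0_compat; auto). lra. }
  unfold qq. split. split. eapply Rle_trans. exact G1. apply Rmax_l.
  apply Rmax_lub_lt; auto.
  split.
  - rewrite E1. apply Rmult_le_compat_r. lra. apply Rmax_l.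
  - rewrite E2. apply Rmult_le_compat_r. lra. apply Rmax_r.
Qed.

Definition Bd (lam : R) (x y x' y' : R -> X) : Prop :=
  forall t, 0 <= t <= T -> norm (minus (x t) (x' t)) <= lam * w1 /\
                           norm (minus (y t) (y' t)) <= lam * w2 * exp (theta * t).

Lemma contr x y x' y' lam : gcont x -> gcont y -> gcont x' -> gcont y' -> 0 <= lam ->
  Bd lam x y x' y' -> Bd (qq * lam) (N1 x y) (N2 x y) (N1 x' y') (N2 x' y').
Proof.
  intros Hx Hy Hx' Hy' Hl HB t Ht.
  destruct w_pos as [P1 P2]. destruct MM_nonneg as [N1' [N2' [N3 N4]]].
  destruct qq_props as [Hq [Q1 Q2]].
  assert (H := Ndiff x y x' y' (lam * w1) (lam * w2) Hx Hy Hx' Hy' ltac:(nra) ltac:(nra) HB t Ht).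
  destruct H as [A B]. split.
  - eapply Rle_trans. exact A.
    replace (m11 MM * (lam * w1) + m12 MM * (lam * w2)) with (lam * (m11 MM * w1 + m12 MM * w2)) by ring.
    replace (qq * lam * w1) with (lam * (qq * w1)) by ring.
    apply Rmult_le_compat_l; auto.
  - eapply Rle_trans. exact B.
    assert (0 < exp (theta * t)) by apply exp_pos.
    replace (m21 MM * (lam * w1) + m22 MM * (lam * w2)) with (lam * (m21 MM * w1 + m22 MM * w2)) by ring.
    replace (qq * lam * w2 * exp (theta * t)) with ((lam * (qq * w2)) * exp (theta * t)) by ring.
    apply Rmult_le_compat_r. lra. apply Rmult_le_compat_l; auto.
Qed.


Definition Phi (z : (R -> X) * (R -> X)) : (R -> X) * (R -> X) := (N1 (fst z) (snd z), N2 (fst z) (snd z)).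
Definition z0 : (R -> X) * (R -> X) := (fun _ => zero, fun _ => beta).
Definition it (n : nat) := Nat.iter n Phi z0.

Lemma const_cont (c : X) : gcont (fun _ => c).
Proof. intros t Ht eps Heps. exists 1. split. lra. intros. rewrite norm_minus_self. auto. Qed.

Lemma it_cont n : gcont (fst (it n)) /\ gcont (snd (it n)).
Proof.
  induction n as [|n [IH1 IH2]].
  - unfold it, z0; simpl. split; apply const_cont.
  - simpl. split. apply N1_cont; auto. apply N2_cont; auto.
Qed.

Lemma bd_exists x y x' y' : gcont x -> gcont y -> gcont x' -> gcont y' ->
  exists lam, 0 <= lam /\ Bd lam x y x' y'.
Proof.
  intros Hx Hy Hx' Hy'. destruct w_pos as [P1 P2].
  destruct (cont_bounded T x ltac:(lra) Hx) as [B1 [B1p HB1]].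
  destruct (cont_bounded T y ltac:(lra) Hy) as [B2 [B2p HB2]].
  destruct (cont_bounded T x' ltac:(lra) Hx') as [B3 [B3p HB3]].
  destruct (cont_bounded T y' ltac:(lra) Hy') as [B4 [B4p HB4]].
  exists ((B1 + B3) / w1 + (B2 + B4) / w2).
  assert (0 <= (B1 + B3) / w1) by (apply Rdiv_le_0_compat; lra).
  assert (0 <= (B2 + B4) / w2) by (apply Rdiv_le_0_compat; lra).
  split. lra. intros t Ht. split.
  - eapply Rle_trans. apply norm_minus_le.
    assert (E : ((B1 + B3) / w1 + (B2 + B4) / w2) * w1 = B1 + B3 + (B2 + B4) / w2 * w1) by (field; lra).
    rewrite E. assert (0 <= (B2 + B4) / w2 * w1) by nra.
    assert (A1 := HB1 t Ht). assert (A3 := HB3 t Ht). lra.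
  - eapply Rle_trans. apply norm_minus_le.
    assert (E : ((B1 + B3) / w1 + (B2 + B4) / w2) * w2 = (B1 + B3) / w1 * w2 + (B2 + B4)) by (field; lra).
    rewrite E. assert (0 <= (B1 + B3) / w1 * w2) by nra.
    assert (1 <= exp (theta * t)) by (rewrite <- exp_0; apply exp_le_mono; nra).
    assert (A2 := HB2 t Ht). assert (A4 := HB4 t Ht).
    assert ((B1 + B3) / w1 * w2 + (B2 + B4) <= ((B1 + B3) / w1 * w2 + (B2 + B4)) * exp (theta * t)).
    { assert (0 <= (B1 + B3) / w1 * w2 + (B2 + B4)) by lra. nra. }
    lra.
Qed.

Lemma it_Bd : exists lam0, 0 <= lam0 /\ forall n, Bd (qq ^ n * lam0) (fst (it (Datatypes.S n))) (snd (it (Datatypes.S n))) (fst (it n)) (snd (it n)).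
Proof.
  destruct (it_cont 1) as [C1 C2]. destruct (it_cont 0) as [C3 C4].
  destruct (bd_exists _ _ _ _ C1 C2 C3 C4) as [lam0 [Hl0 HB0]].
  destruct qq_props as [[Hq0 Hq1] _].
  exists lam0. split; auto. intros n. induction n as [|n IH].
  - simpl. rewrite Rmult_1_l. exact HB0.
  - destruct (it_cont (Datatypes.S n)) as [D1 D2]. destruct (it_cont n) as [D3 D4].
    assert (H := contr _ _ _ _ (qq ^ n * lam0) D1 D2 D3 D4 ltac:(apply Rmult_le_pos; [apply pow_le|]; lra) IH).
    replace (qq ^ Datatypes.S n * lam0) with (qq * (qq ^ n * lam0)) by (simpl; ring).
    exact H.
Qed.

Lemma pow_small C : 0 <= C -> forall eps, 0 < eps -> exists n, C * qq ^ n < eps.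
Proof.
  intros HC eps He. destruct qq_props as [[Hq0 Hq1] _].
  destruct (pow_lt_1_zero qq) with (y := eps / (C + 1)) as [N HN].
  { rewrite Rabs_pos_eq; lra. }
  { apply Rdiv_lt_0_compat; lra. }
  exists N. specialize (HN N (le_n N)). rewrite Rabs_pos_eq in HN by (apply pow_le; lra).
  assert (0 <= qq ^ N) by (apply pow_le; lra).
  apply Rle_lt_trans with ((C + 1) * qq ^ N). nra.
  apply Rmult_lt_reg_r with (/ (C + 1)). apply Rinv_0_lt_compat; lra.
  replace ((C + 1) * qq ^ N * / (C + 1)) with (qq ^ N) by (field; lra). exact HN.
Qed.

Section Lim.
Variable lam0 : R.
Hypothesis Hl0 : 0 <= lam0.
Hypothesis HBn : forall n, Bd (qq ^ n * lam0) (fst (it (Datatypes.S n))) (snd (it (Datatypes.S n))) (fst (it n)) (snd (it n)).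

Definition xl (t : R) : X := limseq (fun n => fst (it n) t).
Definition yl (t : R) : X := limseq (fun n => snd (it n) t).

Lemma lim_bounds t : 0 <= t <= T -> forall n,
  norm (minus (fst (it n) t) (xl t)) <= (lam0 * w1 / (1 - qq)) * qq ^ n /\
  norm (minus (snd (it n) t) (yl t)) <= (lam0 * w2 * exp (theta * t) / (1 - qq)) * qq ^ n.
Proof.
  intros Ht n. destruct qq_props as [[Hq0 Hq1] _]. destruct w_pos as [P1 P2].
  assert (0 < exp (theta * t)) by apply exp_pos.
  split.
  - assert (GG := geom_lim (fun n => fst (it n) t) (lam0 * w1) qq ltac:(lra) ltac:(nra)).
    eapply Rle_trans. apply GG.
    + intros m. destruct (HBn m t Ht) as [A _]. eapply Rle_trans. exact A. apply Req_le. ring.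
    + apply Req_le. field. lra.
  - assert (GG := geom_lim (fun n => snd (it n) t) (lam0 * w2 * exp (theta * t)) qq ltac:(lra)
                  ltac:(apply Rmult_le_pos; nra)).
    eapply Rle_trans. apply GG.
    + intros m. destruct (HBn m t Ht) as [_ A]. eapply Rle_trans. exact A. apply Req_le. ring.
    + apply Req_le. field. lra.
Qed.

Lemma lim_cont : gcont xl /\ gcont yl.
Proof.
  destruct qq_props as [[Hq0 Hq1] _]. destruct w_pos as [P1 P2].
  split.
  - intros t Ht. refine (unif_lim_cont T (fun n => fst (it n)) xl (fun n => (lam0 * w1 / (1 - qq)) * qq ^ n) _ _ _ t Ht).
    + intros n. apply it_cont.
    + intros n s Hs. apply (lim_bounds s Hs n).
    + apply pow_small. apply Rdiv_le_0_compat; nra.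
  - assert (0 < exp (theta * T)) by apply exp_pos.
    intros t Ht. refine (unif_lim_cont T (fun n => snd (it n)) yl (fun n => (lam0 * w2 * exp (theta * T) / (1 - qq)) * qq ^ n) _ _ _ t Ht).
    + intros n. apply it_cont.
    + intros n s Hs. eapply Rle_trans. apply (lim_bounds s Hs n).
      apply Rmult_le_compat_r. apply pow_le; lra.
      unfold Rdiv. apply Rmult_le_compat_r. left; apply Rinv_0_lt_compat; lra.
      apply Rmult_le_compat_l. nra. apply exp_le_mono. nra.
    + apply pow_small. apply Rdiv_le_0_compat. apply Rmult_le_pos; nra. lra.
Qed.

Lemma lim_fixed t : 0 <= t <= T -> xl t = N1 xl yl t /\ yl t = N2 xl yl t.
Proof.
  intros Ht. destruct qq_props as [[Hq0 Hq1] _]. destruct w_pos as [P1 P2].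
  destruct lim_cont as [Lx Ly].
  assert (HB : forall n, Bd (lam0 / (1 - qq) * qq ^ n) (fst (it n)) (snd (it n)) xl yl).
  { intros n s Hs. destruct (lim_bounds s Hs n) as [A B]. split.
    - eapply Rle_trans. exact A. apply Req_le. field. lra.
    - eapply Rle_trans. exact B. apply Req_le. field. lra. }
  assert (HC : forall n, Bd (qq * (lam0 / (1 - qq) * qq ^ n)) (fst (it (Datatypes.S n))) (snd (it (Datatypes.S n))) (N1 xl yl) (N2 xl yl)).
  { intros n. destruct (it_cont n) as [C1 C2].
    apply contr; auto. apply Rmult_le_pos. apply Rdiv_le_0_compat; lra. apply pow_le; lra. }
  assert (0 < exp (theta * t)) by apply exp_pos.
  assert (K1 : 0 <= lam0 * w1 / (1 - qq)) by (apply Rdiv_le_0_compat; nra).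
  assert (K2 : 0 <= lam0 * w2 * exp (theta * t) / (1 - qq)) by (apply Rdiv_le_0_compat; [apply Rmult_le_pos|]; nra).
  assert (K3 : 0 <= lam0 / (1 - qq)) by (apply Rdiv_le_0_compat; lra).
  split.
  - apply eq_of_norm. intros eps Heps.
    destruct (pow_small (lam0 * w1 / (1 - qq) * qq + qq * (lam0 / (1 - qq)) * w1) ltac:(apply Rplus_le_le_0_compat; apply Rmult_le_pos; nra) eps Heps) as [n Hn].
    eapply Rle_trans. apply (norm_minus_tri _ (fst (it (Datatypes.S n)) t)).
    rewrite norm_minus_sym.
    destruct (lim_bounds t Ht (Datatypes.S n)) as [A _]. destruct (HC n t Ht) as [B _].
    simpl pow in A. assert (0 <= qq ^ n) by (apply pow_le; lra).
    assert (E : lam0 * w1 / (1 - qq) * (qq * qq ^ n) + qq * (lam0 / (1 - qq) * qq ^ n) * w1 =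
                (lam0 * w1 / (1 - qq) * qq + qq * (lam0 / (1 - qq)) * w1) * qq ^ n) by ring.
    lra.
  - apply eq_of_norm. intros eps Heps.
    destruct (pow_small (lam0 * w2 * exp (theta * t) / (1 - qq) * qq + qq * (lam0 / (1 - qq)) * w2 * exp (theta * t))
      ltac:(apply Rplus_le_le_0_compat; [apply Rmult_le_pos; lra | apply Rmult_le_pos; [apply Rmult_le_pos; [apply Rmult_le_pos|]|]; lra]) eps Heps) as [n Hn].
    eapply Rle_trans. apply (norm_minus_tri _ (snd (it (Datatypes.S n)) t)).
    rewrite norm_minus_sym.
    destruct (lim_bounds t Ht (Datatypes.S n)) as [_ A]. destruct (HC n t Ht) as [_ B].
    simpl pow in A. assert (0 <= qq ^ n) by (apply pow_le; lra).
    assert (E : lam0 * w2 * exp (theta * t) / (1 - qq) * (qq * qq ^ n) + qq * (lam0 / (1 - qq) * qq ^ n) * w2 * exp (theta * t) =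
                (lam0 * w2 * exp (theta * t) / (1 - qq) * qq + qq * (lam0 / (1 - qq)) * w2 * exp (theta * t)) * qq ^ n) by ring.
    lra.
Qed.

End Lim.

Lemma existence : exists x y, gcont x /\ gcont y /\ forall t, 0 <= t <= T -> x t = N1 x y t /\ y t = N2 x y t.
Proof.
  destruct it_Bd as [lam0 [Hl0 HBn]].
  exists (xl), (yl). destruct (lim_cont lam0 Hl0 HBn) as [A B].
  split; auto. split; auto. apply lim_fixed with lam0; auto.
Qed.

Lemma uniqueness x y x' y' : gcont x -> gcont y -> gcont x' -> gcont y' ->
  (forall t, 0 <= t <= T -> x t = N1 x y t /\ y t = N2 x y t) ->
  (forall t, 0 <= t <= T -> x' t = N1 x' y' t /\ y' t = N2 x' y' t) ->
  forall t, 0 <= t <= T -> x t = x' t /\ y t = y' t.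
Proof.
  intros Hx Hy Hx' Hy' F1 F2.
  destruct qq_props as [[Hq0 Hq1] _]. destruct w_pos as [P1 P2].
  destruct (bd_exists x y x' y' Hx Hy Hx' Hy') as [lam [Hl HB]].
  assert (Hall : forall n, Bd (qq ^ n * lam) x y x' y').
  { induction n as [|n IH]. simpl. rewrite Rmult_1_l. exact HB.
    assert (H := contr x y x' y' (qq ^ n * lam) Hx Hy Hx' Hy' ltac:(apply Rmult_le_pos; [apply pow_le|]; lra) IH).
    intros s Hs. destruct (F1 s Hs) as [E1 E2]. destruct (F2 s Hs) as [E3 E4].
    rewrite E1, E2, E3, E4. replace (qq ^ Datatypes.S n * lam) with (qq * (qq ^ n * lam)) by (simpl; ring).
    apply H; auto. }
  intros t Ht. assert (0 < exp (theta * t)) by apply exp_pos.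
  split; apply eq_of_norm; intros eps Heps.
  - destruct (pow_small (lam * w1) ltac:(nra) eps Heps) as [n Hn].
    destruct (Hall n t Ht) as [A _]. assert (E : qq ^ n * lam * w1 = lam * w1 * qq ^ n) by ring. lra.
  - destruct (pow_small (lam * w2 * exp (theta * t)) ltac:(apply Rmult_le_pos; nra) eps Heps) as [n Hn].
    destruct (Hall n t Ht) as [_ A]. assert (E : qq ^ n * lam * w2 * exp (theta * t) = lam * w2 * exp (theta * t) * qq ^ n) by ring. lra.
Qed.

End Weights.


Lemma Kmild g t : 0 <= t <= T -> gcont g -> is_RInt (fun s => S (t - s) (g s)) 0 t (K g t).
Proof.
  intros Ht Hg. set (h := fun s => S s (g (t - s))).
  assert (A0 : is_RInt h 0 t (K g t)) by exact (K_is g t Ht Hg).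
  assert (A1 := is_RInt_swap h t 0 (K g t) A0).
  assert (A2 : is_RInt h (Ropp 1 * 0 + t) (Ropp 1 * t + t) (opp (K g t))).
  { replace (Ropp 1 * 0 + t) with t by ring. replace (Ropp 1 * t + t) with 0 by ring. exact A1. }
  assert (A3 := is_RInt_comp_lin h (Ropp 1) t 0 t _ A2).
  assert (A4 := is_RInt_scal _ 0 t (Ropp 1) _ A3).
  refine (is_RInt_val _ 0 t (scal (Ropp 1) (opp (K g t))) (K g t) _ _).
  exact (scal_m1_oppG _).
  refine (is_RInt_ext _ _ 0 t _ _ A4).
  intros x Hx. etransitivity. exact (scal_m1m1G _).
  unfold h. f_equal. ring. f_equal. ring.
Qed.

Lemma fp_sol x y : gcont x -> gcont y ->
  (forall t, 0 <= t <= T -> x t = N1 x y t /\ y t = N2 x y t) ->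
  is_solution S F G T a b k beta x y.
Proof.
  intros Hx Hy Hfp.
  assert (T0 : 0 <= 0 <= T) by lra. assert (TT : 0 <= T <= T) by lra.
  assert (Hx0 : x 0 = cpt x y).
  { rewrite (proj1 (Hfp 0 T0)). unfold N1. rewrite HS0, K_zero. exact (plus_zero_r _). }
  assert (Hy0 : y 0 = beta).
  { rewrite (proj2 (Hfp 0 T0)). unfold N2. rewrite HS0, K_zero. exact (plus_zero_r _). }
  split. apply cont_in_cont0T; auto.
  split. apply cont_in_cont0T; auto.
  split. exact Hy0.
  split.
  - intros t Ht. split.
    + exists (K (fF x y) t). split. exact (Kmild (fF x y) t Ht (fF_cont x y Hx Hy)).
      rewrite (proj1 (Hfp t Ht)). unfold N1. rewrite <- Hx0. reflexivity.
    + exists (K (fG x y) t). split. exact (Kmild (fG x y) t Ht (fG_cont x y Hx Hy)).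
      rewrite (proj2 (Hfp t Ht)). unfold N2. rewrite Hy0. reflexivity.
  - rewrite Hy0.
    assert (HxT : x T = plus (S T (x 0)) (K (fF x y) T)).
    { rewrite (proj1 (Hfp T TT)). unfold N1. rewrite <- Hx0. reflexivity. }
    assert (HyT : y T = plus (S T beta) (K (fG x y) T)).
    { rewrite (proj2 (Hfp T TT)). unfold N2. reflexivity. }
    rewrite HxT, HyT.
    exact (bnd1G (V:=CompleteNormedModule.ModuleSpace R_AbsRing X) a k b _ _ beta (x 0) ltac:(lra) Hx0).
Qed.

Lemma sol_fp x y : is_solution S F G T a b k beta x y ->
  gcont x /\ gcont y /\ (forall t, 0 <= t <= T -> x t = N1 x y t /\ y t = N2 x y t).
Proof.
  intros [Cx [Cy [Hy0 [Hm Hbd]]]].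
  assert (Hx : gcont x) by (intros t Ht; apply cont0T_cont_in; auto).
  assert (Hy : gcont y) by (intros t Ht; apply cont0T_cont_in; auto).
  assert (Mx : forall t, 0 <= t <= T -> x t = plus (S t (x 0)) (K (fF x y) t)).
  { intros t Ht. destruct (proj1 (Hm t Ht)) as [I [HI E]]. rewrite E. f_equal.
    rewrite <- (is_RInt_unique _ _ _ _ HI).
    apply is_RInt_unique. exact (Kmild (fF x y) t Ht (fF_cont x y Hx Hy)). }
  assert (My : forall t, 0 <= t <= T -> y t = plus (S t beta) (K (fG x y) t)).
  { intros t Ht. destruct (proj2 (Hm t Ht)) as [I [HI E]]. rewrite E, Hy0. f_equal.
    rewrite <- (is_RInt_unique _ _ _ _ HI).
    apply is_RInt_unique. exact (Kmild (fG x y) t Ht (fG_cont x y Hx Hy)). }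
  assert (Hx0 : x 0 = cpt x y).
  { rewrite Hy0 in Hbd. rewrite (Mx T ltac:(lra)), (My T ltac:(lra)) in Hbd.
    exact (bnd2G (V:=CompleteNormedModule.ModuleSpace R_AbsRing X) a k b _ _ beta (x 0) ltac:(lra) Hbd). }
  split; auto. split; auto.
  intros t Ht. split.
  - rewrite (Mx t Ht). unfold N1. rewrite <- Hx0. reflexivity.
  - rewrite (My t Ht). reflexivity.
Qed.

Lemma main_sec : m11 MM < 1 -> m22 MM < 1 -> 0 < DD ->
  (exists x y, is_solution S F G T a b k beta x y) /\
  (forall x y x' y', is_solution S F G T a b k beta x y -> is_solution S F G T a b k beta x' y' ->
     forall t, 0 <= t <= T -> x t = x' t /\ y t = y' t).
Proof.
  intros H1 H2 H3. split.
  - destruct (existence H1 H2 H3) as [x [y [Hx [Hy Hf]]]].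
    exists x, y. apply fp_sol; auto.
  - intros x y x' y' S1 S2.
    destruct (sol_fp x y S1) as [A [B C]]. destruct (sol_fp x' y' S2) as [A' [B' C']].
    apply (uniqueness H1 H2 H3); auto.
Qed.

End SG.

Theorem mainTheorem3 (X : CompleteNormedModule R_AbsRing) (T : R)
  (S : R -> X -> X) (D : X -> Prop) (A : X -> X) (CA a b k : R)
  (F G : X -> X -> X) (a11 a12 a21 a22 : R) :
  0 < T ->
  C0_semigroup S -> is_generator S D A ->
  0 <= CA -> (forall t u, 0 <= t <= 2 * T -> norm (S t u) <= CA * norm u) ->
  0 < a -> 0 < b -> 0 < k ->
  (forall p : X * X, continuous (fun q : X * X => F (fst q) (snd q)) p) ->
  (forall p : X * X, continuous (fun q : X * X => G (fst q) (snd q)) p) ->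
  0 <= a11 -> 0 <= a12 -> 0 <= a21 -> 0 <= a22 ->
  (forall x xb y yb : X,
      norm (minus (F x y) (F xb yb)) <= a11 * norm (minus x xb) + a12 * norm (minus y yb)) ->
  (forall x xb y yb : X,
      norm (minus (G x y) (G xb yb)) <= a21 * norm (minus x xb) + a22 * norm (minus y yb)) ->
  (exists theta : R, 0 <= theta /\
      convergent_to_zero (Mtheta CA a k T a11 a12 a21 a22 theta)) ->
  forall beta : X,
    (exists x y : R -> X, is_solution S F G T a b k beta x y) /\
    (forall x y x' y' : R -> X,
        is_solution S F G T a b k beta x y -> is_solution S F G T a b k beta x' y' ->
        forall t, 0 <= t <= T -> x t = x' t /\ y t = y' t).
Proof.
  intros HT HC0 Hgen HCA HSb Ha Hb Hk HFc HGc Ha11 Ha12 Ha21 Ha22 HF HG [theta [Hth Hconv]] beta.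
  destruct HC0 as [Hbl [HS0 [HSadd HSr]]].
  assert (HSlin : forall t, 0 <= t -> linop (S t)).
  { intros t Ht. destruct (Hbl t Ht) as [P1 [P2 _]]. split; auto. }
  destruct (MM_nonneg T CA HT HCA a k a11 a12 a21 a22 theta Ha Hk Ha11 Ha12 Ha21 Ha22 Hth) as [N1 [N2 [N3 N4]]].
  destruct (conv_props _ N1 N2 N3 N4 Hconv) as [H1 [H2 H3]].
  exact (main_sec S T CA HT HCA HS0 HSadd HSlin HSb HSr F G a b k a11 a12 a21 a22 theta beta
           Ha Hk Ha11 Ha12 Ha21 Ha22 Hth HF HG H1 H2 H3).
Qed.
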